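(* Let $\mathfrak e\in\mathbb R^\times$. Define $\widetilde s:SO_2(\mathbb R)\to\mathbb C^\times$ by $\widetilde s(k_t)=e^{-\frac{i\pi\operatorname{sgn}(\mathfrak e)}{4}u'(t)}$ for $-\pi\le t<\pi$. Then for all $g_1,g_2\in SO_2(\mathbb R)$, $$\widetilde c_{\mathfrak e}(g_1,g_2)=\widetilde s(g_1)^{-1}\widetilde s(g_2)^{-1}\widetilde s(g_1g_2);$$ in particular the restriction of the class of $\widetilde c_{\mathfrak e}$ to $SO_2(\mathbb R)$ is trivial.
   Context: For $t\in[-\pi,\pi)$, $k_t=\begin{pmatrix}\cos t&-\sin t\\\sin t&\cos t\end{pmatrix}$, so $SO_2(\mathbb R)=\{k_t:-\pi\le t<\pi\}$. $u:\mathbb R\to\mathbb Z$ is $u(t)=2k$ if $t=k\pi$ ($k\in\mathbb Z$) and $u(t)=2k+1$ if $k\pi<t<(k+1)\pi$; $u'(t)=u(t)+\frac{2}{\pi}t$. For $g_1,g_2\in SL_2(\mathbb R)$ with $g_3=g_1g_2$ and lower-left entries $c_1,c_2,c_3$, $\widetilde c_{\mathfrak e}(g_1,g_2)=e^{\frac{i\pi\operatorname{sgn}(\mathfrak e)}{4}\operatorname{sgn}(c_1c_2c_3)}$ (with $\operatorname{sgn}(0)=0$); this is the Perrin–Rao $\mu_8$-valued cocycle attached to the character $t\mapsto e^{2\pi i\mathfrak et}$. *)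

(* Defs.v *)
From Stdlib Require Import Reals ZArith ClassicalEpsilon.
From Coquelicot Require Import Coquelicot.
Open Scope R_scope.

Record mat2 := Mat2 { m11 : R; m12 : R; m21 : R; m22 : R }.

Definition mmul (g h : mat2) : mat2 :=
  Mat2 (m11 g * m11 h + m12 g * m21 h) (m11 g * m12 h + m12 g * m22 h)
       (m21 g * m11 h + m22 g * m21 h) (m21 g * m12 h + m22 g * m22 h).

Definition krot (t : R) : mat2 := Mat2 (cos t) (- sin t) (sin t) (cos t).

Definition inSO2 (g : mat2) : Prop := exists t, -PI <= t < PI /\ g = krot t.

Definition Rsgn (x : R) : R :=
  match Rlt_dec 0 x with
  | left _ => 1
  | right _ => match Rlt_dec x 0 with left _ => -1 | right _ => 0 end
  end.

Definition floorZ (x : R) : Z := (up x - 1)%Z.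

Definition u (t : R) : Z :=
  let k := floorZ (t / PI) in
  match Req_EM_T t (IZR k * PI) with
  | left _ => (2 * k)%Z
  | right _ => (2 * k + 1)%Z
  end.

Definition u' (t : R) : R := IZR (u t) + 2 / PI * t.

Definition cexp (theta : R) : C := (cos theta, sin theta).

Definition ctilde (e : R) (g1 g2 : mat2) : C :=
  cexp (PI * Rsgn e / 4 * Rsgn (m21 g1 * m21 g2 * m21 (mmul g1 g2))).

(* the parameter t in [-pi,pi) of g in SO_2(R) (arbitrary if g not in SO_2) *)
Definition angle (g : mat2) : R :=
  epsilon (inhabits 0) (fun t => -PI <= t < PI /\ g = krot t).

Definition stilde (e : R) (g : mat2) : C :=
  cexp (- (PI * Rsgn e / 4) * u' (angle g)).

(* Main.v *)
Require Import Defs.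
From Stdlib Require Import Reals Lra Lia ClassicalEpsilon.
From Coquelicot Require Import Coquelicot.
Open Scope R_scope.

Lemma cos_p2 x : cos (x + 2*PI) = cos x.
Proof. rewrite cos_plus, cos_2PI, sin_2PI; ring. Qed.
Lemma sin_p2 x : sin (x + 2*PI) = sin x.
Proof. rewrite sin_plus, cos_2PI, sin_2PI; ring. Qed.
Lemma cos_m2 x : cos (x - 2*PI) = cos x.
Proof. rewrite <- (cos_p2 (x - 2*PI)). f_equal; ring. Qed.
Lemma sin_m2 x : sin (x - 2*PI) = sin x.
Proof. rewrite <- (sin_p2 (x - 2*PI)). f_equal; ring. Qed.

Lemma cexp_eq x y : x = y \/ x = y + 2*PI \/ x = y - 2*PI -> cexp x = cexp y.
Proof.
  unfold cexp; intros [->|[->| ->]];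
  [reflexivity | rewrite cos_p2, sin_p2 | rewrite cos_m2, sin_m2]; reflexivity.
Qed.

Lemma Cinv_cexp x : Cinv (cexp x) = cexp (- x).
Proof.
  unfold Cinv, cexp; simpl.
  assert (H : cos x * (cos x * 1) + sin x * (sin x * 1) = 1).
  { pose proof (sin2_cos2 x). unfold Rsqr in H. lra. }
  rewrite H, cos_neg, sin_neg. f_equal; field.
Qed.

Lemma Cmult_cexp x y : Cmult (cexp x) (cexp y) = cexp (x + y).
Proof. unfold Cmult, cexp; simpl. rewrite cos_plus, sin_plus. f_equal; ring. Qed.

Lemma cexp_neq0 x : cexp x <> 0%C.
Proof.
  unfold cexp; intro H. injection H; intros H1 H2.
  apply (cos_sin_0 x); split; assumption.
Qed.

Lemma Rsgn_pos x : 0 < x -> Rsgn x = 1.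
Proof. intros; unfold Rsgn; destruct (Rlt_dec 0 x); [reflexivity|lra]. Qed.
Lemma Rsgn_neg x : x < 0 -> Rsgn x = -1.
Proof. intros; unfold Rsgn; destruct (Rlt_dec 0 x); [lra|].
  destruct (Rlt_dec x 0); [reflexivity|lra]. Qed.
Lemma Rsgn_0 x : x = 0 -> Rsgn x = 0.
Proof. intros; unfold Rsgn; destruct (Rlt_dec 0 x); [lra|].
  destruct (Rlt_dec x 0); [lra|reflexivity]. Qed.

Lemma Rsgn_mult x y : Rsgn (x * y) = Rsgn x * Rsgn y.
Proof.
  destruct (Rtotal_order x 0) as [Hx|[Hx|Hx]];
  destruct (Rtotal_order y 0) as [Hy|[Hy|Hy]].
  all: first [ rewrite (Rsgn_0 x) by lra; rewrite Rsgn_0 by (subst; ring); ring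
             | rewrite (Rsgn_0 y) by lra; rewrite Rsgn_0 by (subst; ring); ring
             | idtac ].
  all: try (rewrite (Rsgn_neg x) by lra); try (rewrite (Rsgn_pos x) by lra);
       try (rewrite (Rsgn_neg y) by lra); try (rewrite (Rsgn_pos y) by lra).
  all: first [ rewrite Rsgn_pos by nra; ring | rewrite Rsgn_neg by nra; ring ].
Qed.

Lemma floorZ_spec x k : IZR k <= x < IZR k + 1 -> floorZ x = k.
Proof.
  intros [H1 H2]. unfold floorZ.
  rewrite <- (up_tech x k) by (try rewrite plus_IZR; simpl; lra). lia.
Qed.

Lemma classify t : -PI <= t < PI ->
  (t = -PI /\ IZR (u t) = -2 /\ Rsgn (sin t) = 0) \/
  (-PI < t < 0 /\ IZR (u t) = -1 /\ Rsgn (sin t) = -1) \/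
  (t = 0 /\ IZR (u t) = 0 /\ Rsgn (sin t) = 0) \/
  (0 < t < PI /\ IZR (u t) = 1 /\ Rsgn (sin t) = 1).
Proof.
  intros [H1 H2]. pose proof PI_RGT_0 as HP.
  destruct (Rle_lt_or_eq_dec _ _ H1) as [H3|H3].
  - destruct (Rtotal_order t 0) as [H4|[H4|H4]].
    + right; left. split; [lra|]. split.
      * unfold u. rewrite (floorZ_spec _ (-1)).
        2:{ split; simpl.
            - apply (Rmult_le_reg_r PI); [lra|]. unfold Rdiv.
              rewrite Rmult_assoc, Rinv_l by lra. lra.
            - apply (Rmult_lt_reg_r PI); [lra|]. unfold Rdiv.
              rewrite Rmult_assoc, Rinv_l by lra. lra. }
        destruct (Req_EM_T t (IZR (-1) * PI)) as [E|E]; simpl in *; lra.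
      * apply Rsgn_neg, sin_lt_0_var; lra.
    + right; right; left. subst t. split; [reflexivity|]. split.
      * unfold u. rewrite (floorZ_spec _ 0).
        2:{ unfold Rdiv; rewrite Rmult_0_l; simpl; lra. }
        destruct (Req_EM_T 0 (IZR 0 * PI)) as [E|E]; simpl in *; [reflexivity|lra].
      * rewrite sin_0; apply Rsgn_0; reflexivity.
    + right; right; right. split; [lra|]. split.
      * unfold u. rewrite (floorZ_spec _ 0).
        2:{ split; simpl.
            - unfold Rdiv. apply Rmult_le_pos; [lra|]. left; apply Rinv_0_lt_compat; lra.
            - apply (Rmult_lt_reg_r PI); [lra|]. unfold Rdiv.
              rewrite Rmult_assoc, Rinv_l by lra. lra. }
        destruct (Req_EM_T t (IZR 0 * PI)) as [E|E]; simpl in *; [lra|]. 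
        reflexivity.
      * apply Rsgn_pos, sin_gt_0; lra.
  - left. subst t. split; [reflexivity|]. split.
    + unfold u. rewrite (floorZ_spec _ (-1)).
      2:{ replace (-PI/PI) with (-1) by (field; lra). simpl. lra. }
      destruct (Req_EM_T (-PI) (IZR (-1) * PI)) as [E|E]; simpl in *; [reflexivity|lra].
    + rewrite sin_neg, sin_PI. apply Rsgn_0; ring.
Qed.

Lemma keyD a b c m :
  -PI <= a < PI -> -PI <= b < PI ->
  ((a + b < -PI /\ c = a + b + 2*PI /\ m = -1) \/
   (-PI <= a + b < PI /\ c = a + b /\ m = 0) \/
   (PI <= a + b /\ c = a + b - 2*PI /\ m = 1)) ->
  let D := Rsgn (sin a) * Rsgn (sin b) * Rsgn (sin c) + IZR (u c) - IZR (u a) - IZR (u b) - 4 * m in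
  D = 0 \/ D = 8 \/ D = -8.
Proof.
  intros Ha Hb Hc D. pose proof PI_RGT_0 as HP.
  assert (Hc' : -PI <= c < PI) by lra.
  unfold D; clear D.
  destruct (classify a Ha) as [[Ha1 [Ha2 Ha3]]|[[Ha1 [Ha2 Ha3]]|[[Ha1 [Ha2 Ha3]]|[Ha1 [Ha2 Ha3]]]]];
  destruct (classify b Hb) as [[Hb1 [Hb2 Hb3]]|[[Hb1 [Hb2 Hb3]]|[[Hb1 [Hb2 Hb3]]|[Hb1 [Hb2 Hb3]]]]];
  destruct (classify c Hc') as [[Hc1 [Hc2 Hc3]]|[[Hc1 [Hc2 Hc3]]|[[Hc1 [Hc2 Hc3]]|[Hc1 [Hc2 Hc3]]]]];
  rewrite Ha2, Ha3, Hb2, Hb3, Hc2, Hc3;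
  destruct Hc as [[Hm1 [Hm2 Hm3]]|[[Hm1 [Hm2 Hm3]]|[Hm1 [Hm2 Hm3]]]];
  first [ left; lra | right; left; lra | right; right; lra ].
Qed.

Lemma krot_inj t t' : -PI <= t < PI -> -PI <= t' < PI -> krot t = krot t' -> t = t'.
Proof.
  intros H1 H2 E.
  assert (E1 : cos t = cos t') by (change (m11 (krot t) = m11 (krot t')); rewrite E; reflexivity).
  assert (E4 : sin t = sin t') by (change (m21 (krot t) = m21 (krot t')); rewrite E; reflexivity).
  pose proof PI_RGT_0 as HP.
  assert (S0 : sin (t - t') = 0) by (rewrite sin_minus, E1, E4; ring).
  assert (C1 : cos (t - t') = 1).
  { rewrite cos_minus, E1, E4. pose proof (sin2_cos2 t'). unfold Rsqr in H. lra. }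
  destruct (sin_eq_0_0 _ S0) as [k Hk].
  assert (Hk1 : -2 < IZR k < 2).
  { split; apply (Rmult_lt_reg_r PI); lra. }
  destruct Hk1 as [Hl Hr]. apply lt_IZR in Hl. apply lt_IZR in Hr.
  assert (k = -1 \/ k = 0 \/ k = 1)%Z as [->|[->| ->]] by lia; simpl in Hk.
  - rewrite Hk in C1. replace (-1 * PI) with (- PI) in C1 by ring.
    rewrite cos_neg, cos_PI in C1. lra.
  - lra.
  - rewrite Hk in C1. rewrite Rmult_1_l, cos_PI in C1. lra.
Qed.

Lemma angle_krot t : -PI <= t < PI -> angle (krot t) = t.
Proof.
  intros Ht. unfold angle.
  destruct (epsilon_spec (inhabits 0) (fun t0 => -PI <= t0 < PI /\ krot t = krot t0))
    as [H1 H2].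
  - exists t; split; [exact Ht|reflexivity].
  - symmetry; apply krot_inj; assumption.
Qed.

Lemma mmul_krot a b : mmul (krot a) (krot b) = krot (a + b).
Proof. unfold mmul, krot; simpl. rewrite cos_plus, sin_plus. f_equal; ring. Qed.

Lemma part1 (e : R) (he : e <> 0) (g1 g2 : mat2) : inSO2 g1 -> inSO2 g2 ->
     ctilde e g1 g2 =
     Cmult (Cmult (Cinv (stilde e g1)) (Cinv (stilde e g2))) (stilde e (mmul g1 g2)).
Proof.
  intros [a [Ha ->]] [b [Hb ->]]. pose proof PI_RGT_0 as HP.
  assert (Hcm : exists c m, (a + b < -PI /\ c = a + b + 2*PI /\ m = -1) \/
   (-PI <= a + b < PI /\ c = a + b /\ m = 0) \/
   (PI <= a + b /\ c = a + b - 2*PI /\ m = 1)).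
  { destruct (Rlt_dec (a+b) (-PI)).
    - exists (a+b+2*PI), (-1). left; repeat split; lra.
    - destruct (Rlt_dec (a+b) PI).
      + exists (a+b), 0. right; left; repeat split; lra.
      + exists (a+b-2*PI), 1. right; right; repeat split; lra. }
  destruct Hcm as [c [m Hcm]].
  assert (Hc : -PI <= c < PI) by lra.
  assert (Hcc : c = a + b - 2 * PI * m) by (destruct Hcm as [[? [? ->]]|[[? [? ->]]|[? [? ->]]]]; lra).
  assert (Kc : krot (a + b) = krot c).
  { destruct Hcm as [[_ [-> _]]|[[_ [-> _]]|[_ [-> _]]]];
    unfold krot; try rewrite cos_p2, sin_p2; try rewrite cos_m2, sin_m2; reflexivity. }
  pose proof (keyD a b c m Ha Hb Hcm) as HD. simpl in HD.
  unfold ctilde, stilde. rewrite mmul_krot, Kc, !angle_krot by assumption.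
  simpl. rewrite !Rsgn_mult, !Cinv_cexp, !Cmult_cexp.
  apply cexp_eq. unfold u'.
  set (D := Rsgn (sin a) * Rsgn (sin b) * Rsgn (sin c) + IZR (u c) - IZR (u a) - IZR (u b) - 4 * m) in HD.
  assert (Hs : Rsgn e = 1 \/ Rsgn e = -1).
  { destruct (Rtotal_order e 0) as [H|[H|H]].
    - right; apply Rsgn_neg; lra.
    - contradiction.
    - left; apply Rsgn_pos; lra. }
  match goal with |- ?X = ?Y \/ _ => assert (E : X - Y = PI * Rsgn e / 4 * D) end.
  { unfold D. rewrite Hcc. field. lra. }
  destruct Hs as [Hs|Hs]; rewrite Hs in E |- *;
  destruct HD as [HD|[HD|HD]]; rewrite HD in E;
  first [ left; lra | right; left; lra | right; right; lra ].
Qed.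

Theorem mainTheorem15 (e : R) (he : e <> 0) :
  (forall g1 g2 : mat2, inSO2 g1 -> inSO2 g2 ->
     ctilde e g1 g2 =
     Cmult (Cmult (Cinv (stilde e g1)) (Cinv (stilde e g2))) (stilde e (mmul g1 g2)))
  /\
  (exists f : mat2 -> C,
     (forall g, inSO2 g -> f g <> 0%C) /\
     (forall g1 g2 : mat2, inSO2 g1 -> inSO2 g2 ->
        ctilde e g1 g2 = Cmult (Cmult (Cinv (f g1)) (Cinv (f g2))) (f (mmul g1 g2)))).
Proof.
  split.
  - intros; apply part1; assumption.
  - exists (stilde e). split.
    + intros g _. unfold stilde. apply cexp_neq0.
    + intros; apply part1; assumption.
Qed.
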